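(* For every positive integer $n$, every feasible partition $w_1\le\dots\le w_m$ of $n$ and every $1\le i\le m$, one has $w_i\le 3^{i-1}$ and $R_i=w_1+\dots+w_i\le \frac{3^i-1}{2}$; these values are the highest possible, i.e. $3^{i-1}$ is the largest value the $i$-th part of any feasible partition can take, and $\frac{3^i-1}{2}$ is the largest positive integer whose feasible partitions have exactly $i$ parts.
   Context: A weighing partition of a positive integer $n$ is a multiset of positive integers summing to $n$ such that every integer $\ell$ with $1\le\ell\le n$ is a sum $\sum_j u_jw_j$ with $u_j\in\{-1,0,1\}$. A feasible partition of $n$ is a weighing partition of $n$ whose number of parts $m$ is minimal among all weighing partitions of $n$, written in nondecreasing order $w_1\le\dots\le w_m$. *)

(* Defs.v *)
From mathcomp Require Import all_boot all_order all_algebra.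
Set Implicit Arguments. Unset Strict Implicit. Unset Printing Implicit Defensive.
Import GRing.Theory Num.Theory.

(* A partition (multiset of positive integers) is represented by a list w;
   its parts are w`_0, ..., w`_(size w - 1). *)

Definition weighing_property (n : nat) (w : seq nat) : Prop :=
  forall l : nat, 1 <= l <= n ->
    exists u : seq int,
      [/\ size u = size w,
          all (fun x : int => x \in [:: (-1)%R; 0%R; 1%R]) u &
          (\sum_(j < size w) nth 0%R u j * Posz (nth 0%N w j))%R = Posz l].

Definition weighing_partition (n : nat) (w : seq nat) : Prop :=
  [/\ all (fun x => 0 < x) w, sumn w = n & weighing_property n w].

Definition feasible_partition (n : nat) (w : seq nat) : Prop :=
  [/\ weighing_partition n w,
      (forall w' : seq nat, weighing_partition n w' -> size w <= size w') &
      sorted leq w].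

(* Main.v *)
Require Import Defs.
From mathcomp Require Import all_boot all_order all_algebra zify.
Set Implicit Arguments. Unset Strict Implicit. Unset Printing Implicit Defensive.
Import GRing.Theory Num.Theory.

Definition sgn (x : int) := x \in [:: (-1)%R; 0%R; 1%R].

Definition step (acc : seq int) (x : nat) : seq int :=
  flatten [seq [:: (s - Posz x)%R; s; (s + Posz x)%R] | s <- acc].
Definition ss (w : seq nat) := foldl step [:: 0%R] w.

Lemma size_step acc x : size (step acc x) = 3 * size acc.
Proof. elim: acc => [|a acc IH] //=. rewrite /step /= in IH *. rewrite IH; lia. Qed.

Lemma size_ss w : size (ss w) = 3 ^ size w.
Proof.
elim/last_ind: w => [|w x IH] //. by rewrite /ss foldl_rcons size_step -/(ss w) IH size_rcons expnS.
Qed.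

Lemma mem_step acc x s (d : int) : s \in acc -> sgn d -> (s + d * Posz x)%R \in step acc x.
Proof.
elim: acc => [|a acc IH] //; rewrite inE => /orP [/eqP -> | /IH H] Hd.
  rewrite /step /= !inE; move: Hd; rewrite /sgn !inE => /orP [/eqP->|/orP [/eqP->|/eqP->]].
  - by rewrite mulN1r eqxx.
  - by rewrite mul0r addr0 eqxx orbT.
  - by rewrite mul1r eqxx !orbT.
by rewrite /step /= !inE -/(step acc x) (H Hd) !orbT.
Qed.

Lemma mem_ss w u : size u = size w -> all sgn u ->
  (\sum_(j < size w) nth 0%R u j * Posz (nth 0%N w j))%R \in ss w.
Proof.
elim/last_ind: w u => [|w x IH] u.
  by move=> _ _; rewrite big_ord0 inE.
case/lastP: u => [|u d]; first by rewrite size_rcons.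
rewrite !size_rcons => /eqP; rewrite eqSS => /eqP Hs.
rewrite all_rcons => /andP [Hd Hu].
rewrite /ss foldl_rcons -/(ss w) big_ord_recr /=.
have -> : (\sum_(i < size w) nth 0%R (rcons u d) (widen_ord (leqnSn (size w)) i) *
   Posz (nth 0%N (rcons w x) (widen_ord (leqnSn (size w)) i)))%R =
   (\sum_(i < size w) nth 0%R u i * Posz (nth 0%N w i))%R.
  apply: eq_bigr => i _ /=; rewrite !nth_rcons Hs ltn_ord //.
rewrite !nth_rcons Hs ltnn eqxx.
exact: mem_step (IH u Hs Hu) Hd.
Qed.
Lemma zero_ss w : 0%R \in ss w.
Proof.
have := @mem_ss w (nseq (size w) 0%R).
rewrite size_nseq big1 => [H|i _]; first apply: H => //.
  by apply/allP => x; rewrite mem_nseq => /andP [_ /eqP ->].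
by rewrite nth_nseq if_same mul0r.
Qed.

Lemma neg_ss n w l : weighing_property n w -> 1 <= l <= n -> (- Posz l)%R \in ss w.
Proof.
move=> Hw /Hw [u [Hs Ha Hsum]].
have := @mem_ss w (map (fun x => - x)%R u).
rewrite size_map Hs => H.
have <- : (\sum_(j < size w) nth 0%R (map (fun x => - x)%R u) j * Posz (nth 0%N w j))%R = (- Posz l)%R.
  rewrite -Hsum -sumrN; apply: eq_bigr => i _.
  by rewrite (nth_map 0%R) ?Hs ?ltn_ord // mulNr.
apply: H => //; apply/allP => x /mapP [y Hy ->].
move/allP: Ha => /(_ y Hy); rewrite /sgn !inE => /orP [/eqP->|/orP [/eqP->|/eqP->]] //.
Qed.

Lemma pos_ss n w l : weighing_property n w -> 1 <= l <= n -> Posz l \in ss w.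
Proof.
move=> Hw /Hw [u [Hs Ha Hsum]]. rewrite -Hsum; exact: mem_ss.
Qed.

Lemma counting n w : weighing_property n w -> (2 * n).+1 <= 3 ^ size w.
Proof.
move=> Hw.
pose L := [seq (Posz k - Posz n)%R | k <- iota 0 (2 * n).+1].
have -> : (2 * n).+1 = size L by rewrite size_map size_iota.
rewrite -size_ss; apply: uniq_leq_size.
  rewrite map_inj_uniq ?iota_uniq // => a b /addIr; by case.
move=> x /mapP [k]; rewrite mem_iota add0n => /andP [_ Hk] ->.
case: (ltngtP k n) => Hkn.
- have -> : (Posz k - Posz n)%R = (- Posz (n - k))%R by lia.
  apply: (neg_ss Hw); lia.
- have -> : (Posz k - Posz n)%R = Posz (k - n) by lia.
  apply: (pos_ss Hw); lia.
- by rewrite Hkn subrr zero_ss.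
Qed.
Definition realiz (w : seq nat) (z : int) := exists u : seq int,
  [/\ size u = size w, all sgn u &
      (\sum_(j < size w) nth 0%R u j * Posz (nth 0%N w j))%R = z].

Lemma realiz_rcons w x z d : realiz w z -> sgn d -> realiz (rcons w x) (z + d * Posz x)%R.
Proof.
move=> [u [Hs Ha Hz]] Hd; exists (rcons u d); split.
- by rewrite !size_rcons Hs.
- by rewrite all_rcons Hd Ha.
rewrite size_rcons big_ord_recr /= -Hz; congr (_ + _)%R.
  apply: eq_bigr => i _ /=; rewrite !nth_rcons Hs ltn_ord //.
by rewrite !nth_rcons Hs ltnn eqxx.
Qed.

Lemma realiz_ext w x : (forall z : int, (- Posz (sumn w) <= z <= Posz (sumn w))%R -> realiz w z) ->
  x <= (2 * sumn w).+1 ->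
  forall z : int, (- Posz (sumn w + x) <= z <= Posz (sumn w + x))%R -> realiz (rcons w x) z.
Proof.
move=> H Hx z Hz.
case: (boolP (Posz (sumn w) < z)%R) => H1.
  have -> : z = ((z - Posz x) + 1 * Posz x)%R by lia.
  apply: realiz_rcons => //; apply: H; lia.
case: (boolP (z < - Posz (sumn w))%R) => H2.
  have -> : z = ((z + Posz x) + (-1) * Posz x)%R by lia.
  apply: realiz_rcons => //; apply: H; lia.
have -> : z = (z + 0 * Posz x)%R by lia.
apply: realiz_rcons => //; apply: H; lia.
Qed.

Definition pw i := mkseq (fun k => 3 ^ k) i.

Lemma sumn_pw i : (2 * sumn (pw i)).+1 = 3 ^ i.
Proof.
elim: i => [|i IH] //. rewrite /pw mkseqS -/(pw i) -cats1 sumn_cat /= expnS; lia.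
Qed.

Lemma realiz_pw i z : (- Posz (sumn (pw i)) <= z <= Posz (sumn (pw i)))%R -> realiz (pw i) z.
Proof.
elim: i z => [|i IH] z.
  rewrite /pw /= => Hz; exists [::]; split => //; rewrite big_ord0; lia.
rewrite {1 2}/pw mkseqS -/(pw i) -cats1 sumn_cat /= addn0 => Hz.
rewrite /pw mkseqS -/(pw i); apply: realiz_ext => //.
have := sumn_pw i; lia.
Qed.

Lemma pw_feasible i : feasible_partition ((3 ^ i - 1) %/ 2) (pw i).
Proof.
have Hn : (3 ^ i - 1) %/ 2 = sumn (pw i) by have := sumn_pw i; lia.
have Hwp : weighing_partition ((3 ^ i - 1) %/ 2) (pw i).
  split.
  - by apply/allP => x /mapP [k _ ->]; rewrite expn_gt0.
  - by rewrite Hn.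
  - move=> l Hl. rewrite Hn in Hl.
    have Hz' : (- Posz (sumn (pw i)) <= Posz l <= Posz (sumn (pw i)))%R.
      move: Hl; set s := sumn (pw i) => Hl. apply/andP; split; lia.
    have [u [Hs Ha Hz]] := realiz_pw Hz'.
    by exists u.
split => //.
- move=> w' [_ _ Hw']; rewrite /pw size_mkseq -(@leq_exp2l 3) // -(sumn_pw i) -Hn.
  exact: counting Hw'.
- rewrite /pw /mkseq; apply: (@homo_sorted _ _ (fun k => 3 ^ k) leq leq) => [a b Hab|].
    exact: leq_pexp2l.
  exact: iota_sorted.
Qed.
Lemma sumPosz (F : nat -> nat) a b :
  (\sum_(a <= j < b) Posz (F j))%R = Posz (\sum_(a <= j < b) F j).
Proof. by rewrite (big_morph Posz PoszD (erefl (Posz 0))). Qed.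

Lemma key n w i : weighing_property n w -> sumn w = n -> sorted leq w -> i < size w ->
  nth 0 w i <= (2 * sumn (take i w)).+1.
Proof.
move=> Hw Hn Hso Hi.
set R := sumn (take i w).
rewrite leqNgt; apply/negP => Hbig.
have Hmono : forall j, i <= j < size w -> nth 0 w i <= nth 0 w j.
  move=> j /andP [Hij Hj]; apply: (sorted_leq_nth leq_trans leqnn) => //.
have sumw : sumn w = \sum_(0 <= j < size w) nth 0 w j by rewrite sumnE (big_nth 0).
have sumR : R = \sum_(0 <= j < i) nth 0 w j.
  rewrite /R sumnE (big_nth 0) size_takel ?(ltnW Hi) //.
  by apply: eq_big_nat => j /andP [_ Hj]; rewrite nth_take.
have HnR : R + nth 0 w i <= n.
  have -> : n = R + sumn (drop i w) by rewrite -Hn -{1}(cat_take_drop i w) sumn_cat.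
  rewrite (drop_nth 0 Hi) /=. lia.
have Hl : 1 <= n - (2 * R).+1 <= n by lia.
have [u [Hs Ha Hsum]] := Hw _ Hl.
have Hsg : forall j, j < size w -> sgn (nth 0%R u j).
  by move=> j Hj; move/(all_nthP 0%R): Ha; apply; rewrite Hs.
pose F j := ((1 - nth 0%R u j) * Posz (nth 0%N w j))%R.
have HF : (\sum_(0 <= j < size w) F j)%R = Posz (2 * R).+1.
  have -> : (\sum_(0 <= j < size w) F j)%R =
     (\sum_(0 <= j < size w) Posz (nth 0%N w j) - \sum_(0 <= j < size w) nth 0%R u j * Posz (nth 0%N w j))%R.
    by rewrite -sumrB; apply: eq_bigr => j _; rewrite /F mulrBl mul1r.
  rewrite sumPosz -sumw big_mkord Hsum Hn. lia.
rewrite (@big_cat_nat _ _ _ i) //= ?(ltnW Hi) // in HF.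
have Hterm : forall j, j < size w ->
    (0 <= F j <= 2 * Posz (nth 0%N w j))%R /\ (F j = 0 \/ Posz (nth 0%N w j) <= F j)%R.
  move=> j /Hsg; rewrite /F /sgn !inE => /orP [/eqP->|/orP [/eqP->|/eqP->]]; split; lia.
have HA : (0 <= \sum_(0 <= j < i) F j <= Posz (2 * R))%R.
  apply/andP; split.
    rewrite big_nat_cond; apply: sumr_ge0 => j /andP [/andP [_ Hj] _].
    by case: (Hterm j (ltn_trans Hj Hi)) => /andP [].
  have -> : Posz (2 * R) = (\sum_(0 <= j < i) 2 * Posz (nth 0%N w j))%R.
    rewrite -mulr_sumr sumPosz -sumR; lia.
  rewrite big_nat_cond [X in (_ <= X)%R]big_nat_cond; apply: ler_sum => j /andP [/andP [_ Hj] _].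
  by case: (Hterm j (ltn_trans Hj Hi)) => /andP [].
have HB : (\sum_(i <= j < size w) F j = 0 \/ Posz (2 * R).+2 <= \sum_(i <= j < size w) F j)%R.
  rewrite big_nat_cond; apply: (big_ind (fun x : int => x = 0 \/ Posz (2 * R).+2 <= x)%R).
  - by left.
  - move=> x y [->|Hx] [->|Hy]; [left|right|right|right]; lia.
  - move=> j /andP [/andP [Hij Hj] _].
    have := Hmono j ltac:(lia). case: (Hterm j Hj) => _ [->|H] H2; [left|right] => //; lia.
move: HF HA HB; set A := (\sum_(0 <= j < i) F j)%R; set B := (\sum_(i <= j < size w) F j)%R. move=> HF HA HB. case: HB => HB; lia.
Qed.

Lemma bound n w : weighing_property n w -> sumn w = n -> sorted leq w ->
  forall i, i <= size w -> (2 * sumn (take i w)).+1 <= 3 ^ i.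
Proof.
move=> Hw Hn Hso; elim => [|i IH] Hi; first by rewrite take0.
have Hi' : i < size w by [].
rewrite (take_nth 0 Hi') -cats1 sumn_cat /= addn0 expnS.
have := key Hw Hn Hso Hi'. have := IH (ltnW Hi'). lia.
Qed.

Theorem theorem3 :
  (forall (n : nat) (w : seq nat), 0 < n -> feasible_partition n w ->
     forall i : nat, 1 <= i <= size w ->
       nth 0 w i.-1 <= 3 ^ i.-1 /\ sumn (take i w) <= (3 ^ i - 1) %/ 2)
  /\
  (forall i : nat, 1 <= i ->
     exists (n : nat) (w : seq nat),
       [/\ 0 < n, feasible_partition n w, i <= size w & nth 0 w i.-1 = 3 ^ i.-1])
  /\
  (forall i : nat, 1 <= i ->
     [/\ 0 < (3 ^ i - 1) %/ 2,
         exists w : seq nat, feasible_partition ((3 ^ i - 1) %/ 2) w,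
         (forall w : seq nat, feasible_partition ((3 ^ i - 1) %/ 2) w -> size w = i) &
         (forall (n : nat) (w : seq nat), 0 < n -> feasible_partition n w ->
            size w = i -> n <= (3 ^ i - 1) %/ 2)]).
Proof.
have Hpos : forall i, 1 <= i -> 0 < (3 ^ i - 1) %/ 2.
  move=> [|i] // _; rewrite expnS; have : 0 < 3 ^ i by rewrite expn_gt0. lia.
split; [|split].
- move=> n w _ [[_ Hn Hw] _ Hso] [|i] // /andP [_ Hi] /=.
  have H1 := bound Hw Hn Hso Hi.
  have H2 := key Hw Hn Hso Hi.
  have H3 := bound Hw Hn Hso (ltnW Hi).
  split; lia.
- move=> i Hi; exists ((3 ^ i - 1) %/ 2), (pw i); split.
  + exact: Hpos.
  + exact: pw_feasible.
  + by rewrite size_mkseq.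
  + by case: i Hi => // i _; rewrite nth_mkseq.
- move=> i Hi; split.
  + exact: Hpos.
  + by exists (pw i); exact: pw_feasible.
  + move=> w [[_ _ Hw] Hmin _]; apply/eqP; rewrite eqn_leq; apply/andP; split.
      by have := Hmin _ (let: And3 H _ _ := pw_feasible i in H); rewrite size_mkseq.
    rewrite -(@leq_exp2l 3) //; have := counting Hw; have := sumn_pw i.
    have : (3 ^ i - 1) %/ 2 = sumn (pw i) by have := sumn_pw i; lia.
    lia.
  + move=> n w _ [[_ _ Hw] _ _] Hs; have := counting Hw; rewrite Hs; lia.
Qed.
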